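(* Let $\mathcal{C},\mathcal{C}'$ be symmetric monoidal anti-involutive categories with duals, with closed monoidal positivity structures $P$ and $P'$ respectively, such that $\mathcal{C}_P$ and $\mathcal{C}'_{P'}$ are symmetric monoidally dagger equivalent. Then $P^*=P$ if and only if $(P')^*=P'$. In other words, dagger compactness is a well-defined property of a symmetric monoidal dagger category, preserved under symmetric monoidal dagger equivalences.
   Context: Symmetric monoidal anti-involutive category $(\mathcal{C},d,\eta)$: symmetric monoidal category with symmetric monoidal functor $d\colon\mathcal{C}\to\mathcal{C}^{\mathrm{op}}$ (monoidal structure $\chi$) and monoidal natural isomorphism $\eta\colon\mathrm{id}\Rightarrow d^2$ with $d(\eta_x)\circ\eta_{dx}=\mathrm{id}$. A Hermitian pairing is an isomorphism $h\colon c\to dc$ with $d(h)\circ\eta_c=h$. $\mathrm{Herm}\,\mathcal{C}$: objects $(c,h)$, morphisms all morphisms of $\mathcal{C}$, dagger $f^\dagger=h_1^{-1}\circ d(f)\circ h_2$, tensor $(c_1\otimes c_2,\chi\circ(h_1\otimes h_2))$. A closed monoidal positivity structure $P$ is a collection of objects of $\mathrm{Herm}\,\mathcal{C}$ surjecting onto objects of $\mathcal{C}$, closed under tensor product and under transfer $h\mapsto d(g)\circ h\circ g$ along isomorphisms $g\colon c'\to c$; $\mathcal{C}_P$ is the full symmetric monoidal dagger subcategory on $P$. Fix a dual functor $(\cdot)^*$ (choice of $x^*,\mathrm{ev}_x,\mathrm{coev}_x$, with $f^*$ the dual morphism); let $\kappa_x\colon(dx)^*\to d(x^* )$ be the canonical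 uniqueness-of-duals isomorphism (both are duals of $dx$, the latter since $d$ is symmetric monoidal). The dual Hermitian pairing of $h\colon c\to dc$ is $\kappa_c\circ(h^* )^{-1}\colon c^*\to d(c^* )$, and $P^*$ denotes the closure under transfer of the set of dual Hermitian pairings of elements of $P$. A symmetric monoidal dagger category with duals presented as $\mathcal{C}_P$ is dagger compact if $P^*=P$. *)

(* Defs.v *)
Set Implicit Arguments.
Unset Strict Implicit.

Record CatData : Type := {
  Ob : Type;
  Hom : Ob -> Ob -> Type;
  idm : forall x : Ob, Hom x x;
  comp : forall x y z : Ob, Hom y z -> Hom x y -> Hom x z }.
Arguments Hom {c} _ _.
Arguments idm {c} x.
Arguments comp {c x y z} _ _.

Declare Scope cat_scope.
Notation "g ∘ f" := (comp g f) (at level 40, left associativity) : cat_scope.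
Open Scope cat_scope.

Section CatDefs.
Variable C : CatData.

Record CatLaws : Prop := {
  comp_idl : forall (x y : Ob C) (f : Hom x y), idm y ∘ f = f;
  comp_idr : forall (x y : Ob C) (f : Hom x y), f ∘ idm x = f;
  comp_assoc : forall (w x y z : Ob C) (f : Hom w x) (g : Hom x y) (h : Hom y z),
      h ∘ (g ∘ f) = (h ∘ g) ∘ f }.

Definition inverse_pair (x y : Ob C) (f : Hom x y) (g : Hom y x) : Prop :=
  g ∘ f = idm x /\ f ∘ g = idm y.

Definition is_iso (x y : Ob C) (f : Hom x y) : Prop :=
  exists g : Hom y x, inverse_pair f g.
End CatDefs.

(** * Symmetric monoidal categories *)

Record SMData (C : CatData) : Type := {
  tens : Ob C -> Ob C -> Ob C;
  tensm : forall x x' y y' : Ob C, Hom x x' -> Hom y y' -> Hom (tens x y) (tens x' y');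
  munit : Ob C;
  alpha : forall x y z : Ob C, Hom (tens (tens x y) z) (tens x (tens y z));
  alpha_inv : forall x y z : Ob C, Hom (tens x (tens y z)) (tens (tens x y) z);
  lam : forall x : Ob C, Hom (tens munit x) x;
  lam_inv : forall x : Ob C, Hom x (tens munit x);
  rho : forall x : Ob C, Hom (tens x munit) x;
  rho_inv : forall x : Ob C, Hom x (tens x munit);
  sigma : forall x y : Ob C, Hom (tens x y) (tens y x) }.
Arguments tens {C} _ _ _.
Arguments tensm {C} _ {x x' y y'} _ _.
Arguments munit {C} _.
Arguments alpha {C} _ x y z.
Arguments alpha_inv {C} _ x y z.
Arguments lam {C} _ x.
Arguments lam_inv {C} _ x.
Arguments rho {C} _ x.
Arguments rho_inv {C} _ x.
Arguments sigma {C} _ x y.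

Section SMDefs.
Variables (C : CatData) (M : SMData C).
Local Notation "x ⊗ y" := (tens M x y) (at level 30, right associativity).
Local Notation "f ⊗m g" := (tensm M f g) (at level 30, right associativity).
Local Notation I := (munit M).

Record SMLaws : Prop := {
  tensm_id : forall x y : Ob C, idm x ⊗m idm y = idm (x ⊗ y);
  tensm_comp : forall (x x' x'' y y' y'' : Ob C) (f : Hom x x') (f' : Hom x' x'')
                 (g : Hom y y') (g' : Hom y' y''),
      (f' ∘ f) ⊗m (g' ∘ g) = (f' ⊗m g') ∘ (f ⊗m g);
  alpha_iso : forall x y z : Ob C, inverse_pair (alpha M x y z) (alpha_inv M x y z);
  lam_iso : forall x : Ob C, inverse_pair (lam M x) (lam_inv M x);
  rho_iso : forall x : Ob C, inverse_pair (rho M x) (rho_inv M x);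
  alpha_nat : forall (x x' y y' z z' : Ob C) (f : Hom x x') (g : Hom y y') (h : Hom z z'),
      alpha M x' y' z' ∘ ((f ⊗m g) ⊗m h) = (f ⊗m (g ⊗m h)) ∘ alpha M x y z;
  lam_nat : forall (x y : Ob C) (f : Hom x y), lam M y ∘ (idm I ⊗m f) = f ∘ lam M x;
  rho_nat : forall (x y : Ob C) (f : Hom x y), rho M y ∘ (f ⊗m idm I) = f ∘ rho M x;
  sigma_nat : forall (x x' y y' : Ob C) (f : Hom x x') (g : Hom y y'),
      sigma M x' y' ∘ (f ⊗m g) = (g ⊗m f) ∘ sigma M x y;
  sigma_invol : forall x y : Ob C, sigma M y x ∘ sigma M x y = idm (x ⊗ y);
  pentagon : forall w x y z : Ob C,
      alpha M w x (y ⊗ z) ∘ alpha M (w ⊗ x) y z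
      = (idm w ⊗m alpha M x y z) ∘ alpha M w (x ⊗ y) z ∘ (alpha M w x y ⊗m idm z);
  triangle : forall x y : Ob C,
      (idm x ⊗m lam M y) ∘ alpha M x I y = rho M x ⊗m idm y;
  hexagon : forall x y z : Ob C,
      alpha M y z x ∘ sigma M x (y ⊗ z) ∘ alpha M x y z
      = (idm y ⊗m sigma M x z) ∘ alpha M y x z ∘ (sigma M x y ⊗m idm z) }.

(** * Anti-involutions: a symmetric monoidal functor d : C -> C^op with
    monoidal structure chi, and a monoidal natural iso eta : id => d^2
    with d(eta_x) o eta_{dx} = id.  chi is written in the direction of C,
    chi_{x,y} : dx (x) dy -> d(x (x) y), as in the tensor of Herm C. *)

Record AntiInv : Type := {
  dO : Ob C -> Ob C;
  dM : forall x y : Ob C, Hom x y -> Hom (dO y) (dO x);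
  chi : forall x y : Ob C, Hom (dO x ⊗ dO y) (dO (x ⊗ y));
  chi_inv : forall x y : Ob C, Hom (dO (x ⊗ y)) (dO x ⊗ dO y);
  chi0 : Hom I (dO I);
  chi0_inv : Hom (dO I) I;
  eta : forall x : Ob C, Hom x (dO (dO x));
  eta_inv : forall x : Ob C, Hom (dO (dO x)) x }.

Variable A : AntiInv.
Local Notation d := (dO A).
Local Notation dm f := (dM A f).

Record AntiInvLaws : Prop := {
  dM_id : forall x : Ob C, dm (idm x) = idm (d x);
  dM_comp : forall (x y z : Ob C) (f : Hom x y) (g : Hom y z), dm (g ∘ f) = dm f ∘ dm g;
  chi_iso : forall x y : Ob C, inverse_pair (chi A x y) (chi_inv A x y);
  chi0_iso : inverse_pair (chi0 A) (chi0_inv A);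
  chi_nat : forall (x x' y y' : Ob C) (f : Hom x x') (g : Hom y y'),
      chi A x y ∘ (dm f ⊗m dm g) = dm (f ⊗m g) ∘ chi A x' y';
  chi_assoc : forall x y z : Ob C,
      chi A (x ⊗ y) z ∘ (chi A x y ⊗m idm (d z))
      = dm (alpha M x y z) ∘ chi A x (y ⊗ z) ∘ (idm (d x) ⊗m chi A y z)
        ∘ alpha M (d x) (d y) (d z);
  chi_lunit : forall x : Ob C,
      chi A I x ∘ (chi0 A ⊗m idm (d x)) = dm (lam M x) ∘ lam M (d x);
  chi_runit : forall x : Ob C,
      chi A x I ∘ (idm (d x) ⊗m chi0 A) = dm (rho M x) ∘ rho M (d x);
  chi_sym : forall x y : Ob C,
      chi A y x ∘ sigma M (d x) (d y) = dm (sigma M y x) ∘ chi A x y;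
  eta_iso : forall x : Ob C, inverse_pair (eta A x) (eta_inv A x);
  eta_nat : forall (x y : Ob C) (f : Hom x y), eta A y ∘ f = dm (dm f) ∘ eta A x;
  eta_tens : forall x y : Ob C,
      dm (chi A x y) ∘ eta A (x ⊗ y) = chi A (d x) (d y) ∘ (eta A x ⊗m eta A y);
  eta_unit : dm (chi0 A) ∘ eta A I = chi0 A;
  eta_invol : forall x : Ob C, dm (eta A x) ∘ eta A (d x) = idm (d x) }.

Definition is_herm (c : Ob C) (h : Hom c (d c)) : Prop :=
  is_iso h /\ dm h ∘ eta A c = h.

Definition transfer (c c' : Ob C) (g : Hom c' c) (h : Hom c (d c)) : Hom c' (d c') :=
  dm g ∘ h ∘ g.

Definition herm_tens (c1 c2 : Ob C) (h1 : Hom c1 (d c1)) (h2 : Hom c2 (d c2))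
  : Hom (c1 ⊗ c2) (d (c1 ⊗ c2)) := chi A c1 c2 ∘ (h1 ⊗m h2).

Definition PairingSet : Type := forall c : Ob C, Hom c (d c) -> Prop.

(** Closed monoidal positivity structure.  "Closed under tensor product"
    includes the monoidal unit (I, chi0) of Herm C (the nullary tensor),
    so that C_P is a monoidal subcategory. *)
Record PosStruct (P : PairingSet) : Prop := {
  pos_herm : forall (c : Ob C) (h : Hom c (d c)), P c h -> is_herm h;
  pos_surj : forall c : Ob C, exists h : Hom c (d c), P c h;
  pos_unit : P I (chi0 A);
  pos_tens : forall (c1 c2 : Ob C) (h1 : Hom c1 (d c1)) (h2 : Hom c2 (d c2)),
      P c1 h1 -> P c2 h2 -> P (c1 ⊗ c2) (herm_tens h1 h2);
  pos_trans : forall (c c' : Ob C) (h : Hom c (d c)) (g : Hom c' c),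
      P c h -> is_iso g -> P c' (transfer g h) }.

Definition pairing_set_eq (P Q : PairingSet) : Prop :=
  forall (c : Ob C) (h : Hom c (d c)), P c h <-> Q c h.

(** * Duals *)

Record DualData : Type := {
  dual : Ob C -> Ob C;
  ev : forall x : Ob C, Hom (dual x ⊗ x) I;
  coev : forall x : Ob C, Hom I (x ⊗ dual x) }.

Variable D : DualData.
Local Notation "x ^*" := (dual D x) (at level 8).

Record DualLaws : Prop := {
  zigzag1 : forall x : Ob C,
      rho M x ∘ (idm x ⊗m ev D x) ∘ alpha M x (x^*) x ∘ (coev D x ⊗m idm x) ∘ lam_inv M x
      = idm x;
  zigzag2 : forall x : Ob C,
      lam M (x^*) ∘ (ev D x ⊗m idm (x^*)) ∘ alpha_inv M (x^*) x (x^*)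
        ∘ (idm (x^*) ⊗m coev D x) ∘ rho_inv M (x^*)
      = idm (x^*) }.

Definition dualm (x y : Ob C) (f : Hom x y) : Hom (y^*) (x^*) :=
  lam M (x^*) ∘ (ev D y ⊗m idm (x^*)) ∘ alpha_inv M (y^*) y (x^*)
    ∘ (idm (y^*) ⊗m (f ⊗m idm (x^*))) ∘ (idm (y^*) ⊗m coev D x) ∘ rho_inv M (y^*).

(** d(x^∨) is a dual of dx (d is symmetric monoidal): its coevaluation
    I -> dx (x) d(x^∨) is  sigma o chi^{-1} o d(ev_x) o chi0. *)
Definition coev_d (x : Ob C) : Hom I (d x ⊗ d (x^*)) :=
  sigma M (d (x^*)) (d x) ∘ chi_inv A (x^*) x ∘ dm (ev D x) ∘ chi0 A.

(** kappa_x : (dx)^∨ -> d(x^∨), the canonical uniqueness-of-duals iso. *)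
Definition kappa (x : Ob C) : Hom ((d x)^*) (d (x^*)) :=
  lam M (d (x^*)) ∘ (ev D (d x) ⊗m idm (d (x^*))) ∘ alpha_inv M ((d x)^*) (d x) (d (x^*))
    ∘ (idm ((d x)^*) ⊗m coev_d x) ∘ rho_inv M ((d x)^*).

Definition is_dual_pairing (c : Ob C) (h : Hom c (d c)) (k : Hom (c^*) (d (c^*))) : Prop :=
  exists hi : Hom (c^*) ((d c)^*), inverse_pair (dualm h) hi /\ k = kappa c ∘ hi.

Definition Pstar (P : PairingSet) : PairingSet :=
  fun (c' : Ob C) (k' : Hom c' (d c')) =>
    exists (c : Ob C) (h : Hom c (d c)) (k : Hom (c^*) (d (c^*))),
      P c h /\ is_dual_pairing h k /\
      exists g : Hom c' (c^*), is_iso g /\ k' = transfer g k.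

End SMDefs.

Arguments dO {C M} _ _.
Arguments dM {C M} _ {x y} _.
Arguments chi {C M} _ x y.
Arguments chi0 {C M} _.
Arguments eta {C M} _ x.

(** * Symmetric monoidal anti-involutive categories with duals *)

Record SMAICD : Type := {
  sC : CatData;
  sM : SMData sC;
  sA : AntiInv sM;
  sD : DualData sM;
  sC_laws : CatLaws sC;
  sM_laws : SMLaws sM;
  sA_laws : AntiInvLaws sA;
  sD_laws : DualLaws sD }.

(** * The symmetric monoidal dagger category C_P *)

Section CP.
Variables (X : SMAICD) (P : PairingSet (sA X)) (hP : PosStruct P).
Local Notation M := (sM X).
Local Notation A := (sA X).

Record PObj : Type := { pob : Ob (sC X); ph : Hom pob (dO A pob); pin : @P pob ph }.

Definition ptens (a b : PObj) : PObj :=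
  {| pob := tens M (pob a) (pob b);
     ph := herm_tens (ph a) (ph b);
     pin := pos_tens hP (pin a) (pin b) |}.

Definition punit : PObj := {| pob := munit M; ph := chi0 A; pin := pos_unit hP |}.

Definition is_dagger (a b : PObj) (f : Hom (pob a) (pob b)) (g : Hom (pob b) (pob a)) : Prop :=
  exists hai : Hom (dO A (pob a)) (pob a),
    inverse_pair (ph a) hai /\ g = hai ∘ dM A f ∘ ph b.

Definition unitary (a b : PObj) (u : Hom (pob a) (pob b)) : Prop :=
  exists v : Hom (pob b) (pob a), @is_dagger a b u v /\ inverse_pair u v.
End CP.

Arguments is_dagger {X P} a b f g.
Arguments unitary {X P} a b u.
Arguments ptens {X P} hP a b.
Arguments punit {X P} hP.

Arguments pob {X P} _.
Arguments ph {X P} _.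

(** A symmetric monoidal dagger equivalence C_P -> C'_{P'}: a strong
    symmetric monoidal dagger functor with unitary structure morphisms,
    which is full, faithful, and essentially surjective up to unitary iso
    (equivalently: it has an inverse dagger functor with unitary natural
    isomorphisms). *)
Unset Implicit Arguments.
Section Equiv.
Variables (X Y : SMAICD)
          (P : PairingSet (sA X)) (hP : PosStruct P)
          (Q : PairingSet (sA Y)) (hQ : PosStruct Q).
Local Notation M := (sM X).
Local Notation N := (sM Y).

Record SMDaggerEquivalence : Type := {
  F : PObj P -> PObj Q;
  Fm : forall a b : PObj P, Hom (pob a) (pob b) -> Hom (pob (F a)) (pob (F b));
  mu : forall a b : PObj P,
      Hom (tens N (pob (F a)) (pob (F b))) (pob (F (ptens hP a b)));
  mu0 : Hom (munit N) (pob (F (punit hP)));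
  F_id : forall a : PObj P, Fm a a (idm (pob a)) = idm (pob (F a));
  F_comp : forall (a b c : PObj P) (f : Hom (pob a) (pob b)) (g : Hom (pob b) (pob c)),
      Fm a c (g ∘ f) = Fm b c g ∘ Fm a b f;
  F_dagger : forall (a b : PObj P) (f : Hom (pob a) (pob b)) (g : Hom (pob b) (pob a)),
      is_dagger a b f g -> is_dagger (F a) (F b) (Fm a b f) (Fm b a g);
  mu_nat : forall (a a' b b' : PObj P) (f : Hom (pob a) (pob a')) (g : Hom (pob b) (pob b')),
      mu a' b' ∘ tensm N (Fm a a' f) (Fm b b' g)
      = Fm (ptens hP a b) (ptens hP a' b') (tensm M f g) ∘ mu a b;
  mu_unitary : forall a b : PObj P,
      unitary (ptens hQ (F a) (F b)) (F (ptens hP a b)) (mu a b);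
  mu0_unitary : unitary (punit hQ) (F (punit hP)) mu0;
  F_assoc : forall a b c : PObj P,
      Fm (ptens hP (ptens hP a b) c) (ptens hP a (ptens hP b c))
         (alpha M (pob a) (pob b) (pob c))
        ∘ mu (ptens hP a b) c ∘ tensm N (mu a b) (idm (pob (F c)))
      = mu a (ptens hP b c) ∘ tensm N (idm (pob (F a))) (mu b c)
        ∘ alpha N (pob (F a)) (pob (F b)) (pob (F c));
  F_lunit : forall a : PObj P,
      Fm (ptens hP (punit hP) a) a (lam M (pob a)) ∘ mu (punit hP) a
        ∘ tensm N mu0 (idm (pob (F a)))
      = lam N (pob (F a));
  F_runit : forall a : PObj P,
      Fm (ptens hP a (punit hP)) a (rho M (pob a)) ∘ mu a (punit hP)
        ∘ tensm N (idm (pob (F a))) mu0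
      = rho N (pob (F a));
  F_sym : forall a b : PObj P,
      Fm (ptens hP a b) (ptens hP b a) (sigma M (pob a) (pob b)) ∘ mu a b
      = mu b a ∘ sigma N (pob (F a)) (pob (F b));
  F_full : forall (a b : PObj P) (g : Hom (pob (F a)) (pob (F b))),
      exists f : Hom (pob a) (pob b), Fm a b f = g;
  F_faithful : forall (a b : PObj P) (f g : Hom (pob a) (pob b)),
      Fm a b f = Fm a b g -> f = g;
  F_ess_surj : forall b : PObj Q,
      exists (a : PObj P) (u : Hom (pob (F a)) (pob b)), unitary (F a) b u }.

Definition sm_dagger_equivalent : Prop := inhabited SMDaggerEquivalence.
End Equiv.
Arguments sm_dagger_equivalent {X Y P} hP {Q} hQ.

(* Main.v *)
Require Import Defs.
From Stdlib Require Import Setoid Morphisms.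

Set Implicit Arguments.
Unset Strict Implicit.

Lemma postk {C : CatData} {x y : Ob C} {f g : Hom x y} : f = g -> forall (w : Ob C) (k : Hom w x), f ∘ k = g ∘ k.
Proof. intros ->; reflexivity. Qed.

Ltac inst H := repeat (let H' := fresh in epose proof (H _) as H'; clear H; rename H' into H).
Ltac ran HC H := repeat rewrite <- (comp_assoc HC) in H.
Ltac ra HC := repeat rewrite <- (comp_assoc HC).
Ltac rkgen HC Hk := 
  repeat rewrite <- (comp_assoc HC) in Hk;
  let Hk2 := fresh "Hk" in pose proof (postk Hk) as Hk2;
  repeat setoid_rewrite <- (comp_assoc HC) in Hk2; first [rewrite Hk2 | rewrite Hk]; clear Hk Hk2;
  ra HC.
Ltac rk HC L := let Hk := fresh "Hk" in epose proof L as Hk; inst Hk; rkgen HC Hk.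
Ltac rkr HC L := let Hk := fresh "Hk" in epose proof L as Hk; inst Hk; apply eq_sym in Hk; rkgen HC Hk.


Module A5.
Set Default Proof Using "All".
Section Mon.
Variables (C : CatData) (HC : CatLaws C) (M : SMData C) (HM : SMLaws M).
Local Notation "x ⊗ y" := (tens M x y) (at level 30, right associativity).
Local Notation "f ⊗m g" := (tensm M f g) (at level 30, right associativity).
Local Notation I := (munit M).

Lemma c1l {x y : Ob C} (f : Hom x y) : idm y ∘ f = f. Proof. apply (comp_idl HC). Qed.
Lemma c1r {x y : Ob C} (f : Hom x y) : f ∘ idm x = f. Proof. apply (comp_idr HC). Qed.
Lemma cA {w x y z : Ob C} (f : Hom w x) (g : Hom x y) (h : Hom y z) : h ∘ (g ∘ f) = (h ∘ g) ∘ f.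
Proof. apply (comp_assoc HC). Qed.

Lemma aK (x y z : Ob C) : alpha_inv M x y z ∘ alpha M x y z = idm _. Proof. apply (alpha_iso HM). Qed.
Lemma aK' (x y z : Ob C) : alpha M x y z ∘ alpha_inv M x y z = idm _. Proof. apply (alpha_iso HM). Qed.
Lemma lK (x : Ob C) : lam_inv M x ∘ lam M x = idm _. Proof. apply (lam_iso HM). Qed.
Lemma lK' (x : Ob C) : lam M x ∘ lam_inv M x = idm _. Proof. apply (lam_iso HM). Qed.
Lemma rK (x : Ob C) : rho_inv M x ∘ rho M x = idm _. Proof. apply (rho_iso HM). Qed.
Lemma rK' (x : Ob C) : rho M x ∘ rho_inv M x = idm _. Proof. apply (rho_iso HM). Qed.
Lemma sK (x y : Ob C) : sigma M y x ∘ sigma M x y = idm _. Proof. apply (sigma_invol HM). Qed.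

Lemma tcomp {x x' x'' y y' y'' : Ob C} (f : Hom x x') (f' : Hom x' x'') (g : Hom y y') (g' : Hom y' y'') :
  (f' ∘ f) ⊗m (g' ∘ g) = (f' ⊗m g') ∘ (f ⊗m g).
Proof. apply (tensm_comp HM). Qed.
Lemma tmerge {x x' x'' y y' y'' : Ob C} (f : Hom x x') (f' : Hom x' x'') (g : Hom y y') (g' : Hom y' y'') :
  (f' ⊗m g') ∘ (f ⊗m g) = (f' ∘ f) ⊗m (g' ∘ g).
Proof. symmetry; apply (tensm_comp HM). Qed.
Lemma tid (x y : Ob C) : idm x ⊗m idm y = idm (x ⊗ y). Proof. apply (tensm_id HM). Qed.
Lemma tsl {x y z w : Ob C} (f : Hom x y) (g : Hom y z) : (g ∘ f) ⊗m idm w = (g ⊗m idm w) ∘ (f ⊗m idm w).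
Proof. rewrite <- tcomp, c1l; reflexivity. Qed.
Lemma tsr {x y z w : Ob C} (f : Hom x y) (g : Hom y z) : idm w ⊗m (g ∘ f) = (idm w ⊗m g) ∘ (idm w ⊗m f).
Proof. rewrite <- tcomp, c1l; reflexivity. Qed.
Lemma tml {x y z w : Ob C} (f : Hom x y) (g : Hom y z) : (g ⊗m idm w) ∘ (f ⊗m idm w) = (g ∘ f) ⊗m idm w.
Proof. rewrite tsl; reflexivity. Qed.
Lemma tmr {x y z w : Ob C} (f : Hom x y) (g : Hom y z) : (idm w ⊗m g) ∘ (idm w ⊗m f) = idm w ⊗m (g ∘ f).
Proof. rewrite tsr; reflexivity. Qed.
Lemma tmlk {x y z w v : Ob C} (f : Hom x y) (g : Hom y z) (k : Hom v (x ⊗ w)) :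
  (g ⊗m idm w) ∘ ((f ⊗m idm w) ∘ k) = ((g ∘ f) ⊗m idm w) ∘ k.
Proof. rewrite cA, tml; reflexivity. Qed.
Lemma tmrk {x y z w v : Ob C} (f : Hom x y) (g : Hom y z) (k : Hom v (w ⊗ x)) :
  (idm w ⊗m g) ∘ ((idm w ⊗m f) ∘ k) = (idm w ⊗m (g ∘ f)) ∘ k.
Proof. rewrite cA, tmr; reflexivity. Qed.
Lemma t_lr {x y z w : Ob C} (f : Hom x y) (g : Hom z w) : (f ⊗m idm w) ∘ (idm x ⊗m g) = f ⊗m g.
Proof. rewrite tmerge, c1l, c1r; reflexivity. Qed.
Lemma t_rl {x y z w : Ob C} (f : Hom x y) (g : Hom z w) : (idm y ⊗m g) ∘ (f ⊗m idm z) = f ⊗m g.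
Proof. rewrite tmerge, c1l, c1r; reflexivity. Qed.
Lemma t_split_lr {x y z w : Ob C} (f : Hom x y) (g : Hom z w) : f ⊗m g = (f ⊗m idm w) ∘ (idm x ⊗m g).
Proof. rewrite t_lr; reflexivity. Qed.
Lemma t_split_rl {x y z w : Ob C} (f : Hom x y) (g : Hom z w) : f ⊗m g = (idm y ⊗m g) ∘ (f ⊗m idm z).
Proof. rewrite t_rl; reflexivity. Qed.

Lemma anat {x x' y y' z z' : Ob C} (f : Hom x x') (g : Hom y y') (h : Hom z z') :
  alpha M x' y' z' ∘ ((f ⊗m g) ⊗m h) = (f ⊗m (g ⊗m h)) ∘ alpha M x y z.
Proof. apply (alpha_nat HM). Qed.
Lemma ainat {x x' y y' z z' : Ob C} (f : Hom x x') (g : Hom y y') (h : Hom z z') :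
  alpha_inv M x' y' z' ∘ (f ⊗m (g ⊗m h)) = ((f ⊗m g) ⊗m h) ∘ alpha_inv M x y z.
Proof.
  rewrite <- (c1r (alpha_inv M x' y' z' ∘ _)). rewrite <- (aK' x y z).
  rewrite cA. f_equal. rewrite <- !cA. rewrite <- anat. rewrite !cA, aK, c1l. reflexivity.
Qed.
Lemma lnat {x y : Ob C} (f : Hom x y) : lam M y ∘ (idm I ⊗m f) = f ∘ lam M x.
Proof. apply (lam_nat HM). Qed.
Lemma linat {x y : Ob C} (f : Hom x y) : lam_inv M y ∘ f = (idm I ⊗m f) ∘ lam_inv M x.
Proof.
  rewrite <- (c1r (lam_inv M y ∘ f)), <- (lK' x), !cA. f_equal.
  rewrite <- !cA, <- lnat, !cA, lK, c1l. reflexivity.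
Qed.
Lemma rnat {x y : Ob C} (f : Hom x y) : rho M y ∘ (f ⊗m idm I) = f ∘ rho M x.
Proof. apply (rho_nat HM). Qed.
Lemma rinat {x y : Ob C} (f : Hom x y) : rho_inv M y ∘ f = (f ⊗m idm I) ∘ rho_inv M x.
Proof.
  rewrite <- (c1r (rho_inv M y ∘ f)), <- (rK' x), !cA. f_equal.
  rewrite <- !cA, <- rnat, !cA, rK, c1l. reflexivity.
Qed.
Lemma snat {x x' y y' : Ob C} (f : Hom x x') (g : Hom y y') :
  sigma M x' y' ∘ (f ⊗m g) = (g ⊗m f) ∘ sigma M x y.
Proof. apply (sigma_nat HM). Qed.

Lemma cancel_r {x y z : Ob C} (f g : Hom y z) (r : Hom x y) (r' : Hom y x) :
  r ∘ r' = idm y -> f ∘ r = g ∘ r -> f = g.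
Proof. intros H1 H2. rewrite <- (c1r f), <- (c1r g), <- H1, !cA, H2. reflexivity. Qed.
Lemma cancel_l {x y z : Ob C} (f g : Hom x y) (r : Hom y z) (r' : Hom z y) :
  r' ∘ r = idm y -> r ∘ f = r ∘ g -> f = g.
Proof. intros H1 H2. rewrite <- (c1l f), <- (c1l g), <- H1, <- !cA, H2. reflexivity. Qed.

Lemma lam_faith {x y : Ob C} (f g : Hom x y) : idm I ⊗m f = idm I ⊗m g -> f = g.
Proof.
  intro H. apply (cancel_r (r := lam M x) (r' := lam_inv M x)); [apply lK'|].
  rewrite <- !lnat, H. reflexivity.
Qed.
Lemma rho_faith {x y : Ob C} (f g : Hom x y) : f ⊗m idm I = g ⊗m idm I -> f = g.
Proof.
  intro H. apply (cancel_r (r := rho M x) (r' := rho_inv M x)); [apply rK'|].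
  rewrite <- !rnat, H. reflexivity.
Qed.

Lemma K3 (x y : Ob C) : lam M (x ⊗ y) ∘ alpha M I x y = lam M x ⊗m idm y.
Proof.
  apply lam_faith.
  apply (cancel_r (r := alpha M I (I ⊗ x) y ∘ (alpha M I I x ⊗m idm y))
                  (r' := (alpha_inv M I I x ⊗m idm y) ∘ alpha_inv M I (I ⊗ x) y)).
  { rewrite <- cA, (cA _ (alpha_inv M I I x ⊗m idm y)), tml, aK', tid, c1l, aK'. reflexivity. }
  rewrite tsr. ra HC.
  rkr HC (pentagon HM I I x y).
  rk HC (triangle HM I (x ⊗ y)).
  rewrite <- (tid x y). rkr HC (anat (rho M I) (idm x) (idm y)).
  rkr HC (triangle HM I x). rewrite tsl. ra HC.
  rk HC (anat (idm I) (lam M x) (idm y)). reflexivity.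
Qed.
Lemma K1 (y s : Ob C) : (idm y ⊗m rho M s) ∘ alpha M y s I = rho M (y ⊗ s).
Proof.
  apply rho_faith.
  apply (cancel_l (r := alpha M y s I) (r' := alpha_inv M y s I)); [apply aK|].
  rkr HC (triangle HM (y ⊗ s) I).
  rewrite <- (tid y s).
  rk HC (anat (idm y) (idm s) (lam M I)).
  rk HC (pentagon HM y s I I).
  rk HC (tmr (w:=y) (alpha M s I I) (idm s ⊗m lam M I)).
  rewrite (triangle HM s I).
  rkr HC (anat (idm y) (rho M s) (idm I)).
  rewrite tsl. ra HC. reflexivity.
Qed.

Lemma K2 : lam M I = rho M I.
Proof.
  apply rho_faith.
  assert (E : lam M (I ⊗ I) = idm I ⊗m lam M I).
  { apply (cancel_l (r := lam M I) (r' := lam_inv M I)); [apply lK|].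
    rewrite lnat. reflexivity. }
  rewrite <- K3, <- (triangle HM I I), E. reflexivity.
Qed.
Lemma K2' : lam_inv M I = rho_inv M I.
Proof.
  apply (cancel_l (r := lam M I) (r' := lam_inv M I)); [apply lK|].
  rewrite lK', K2, rK'. reflexivity.
Qed.
Lemma K1' (y s : Ob C) : idm y ⊗m rho_inv M s = alpha M y s I ∘ rho_inv M (y ⊗ s).
Proof.
  apply (cancel_l (r := idm y ⊗m rho M s) (r' := idm y ⊗m rho_inv M s)).
  { rewrite tmr, rK, tid. reflexivity. }
  rewrite tmr, rK', tid, cA, K1, rK'. reflexivity.
Qed.
Lemma K3' (y z : Ob C) : alpha_inv M I y z ∘ lam_inv M (y ⊗ z) = lam_inv M y ⊗m idm z.
Proof.
  apply (cancel_l (r := lam M y ⊗m idm z) (r' := lam_inv M y ⊗m idm z)).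
  { rewrite tml, lK, tid. reflexivity. }
  rewrite tml, lK', tid, <- K3. ra HC. rk HC (aK' I y z). rewrite c1l, lK'. reflexivity.
Qed.
Lemma tri' (x y : Ob C) : alpha M x I y ∘ (rho_inv M x ⊗m idm y) = idm x ⊗m lam_inv M y.
Proof.
  apply (cancel_l (r := idm x ⊗m lam M y) (r' := idm x ⊗m lam_inv M y)).
  { rewrite tmr, lK, tid. reflexivity. }
  rewrite tmr, lK', tid. rewrite cA, (triangle HM), tml, rK', tid. reflexivity.
Qed.
Lemma pent' (w x y z : Ob C) :
  (idm w ⊗m alpha_inv M x y z) ∘ alpha M w x (y ⊗ z)
  = alpha M w (x ⊗ y) z ∘ (alpha M w x y ⊗m idm z) ∘ alpha_inv M (w ⊗ x) y z.
Proof.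
  apply (cancel_l (r := idm w ⊗m alpha M x y z) (r' := idm w ⊗m alpha_inv M x y z)).
  { rewrite tmr, aK, tid. reflexivity. }
  apply (cancel_r (r := alpha M (w ⊗ x) y z) (r' := alpha_inv M (w ⊗ x) y z)); [apply aK'|].
  ra HC. rk HC (tmr (w:=w) (alpha_inv M x y z) (alpha M x y z)). rewrite aK', tid, c1l.
  rewrite (aK (w ⊗ x) y z), c1r. rewrite (pentagon HM). ra HC. reflexivity.
Qed.
Lemma pent'' (w x y z : Ob C) :
  alpha M (w ⊗ x) y z ∘ (alpha_inv M w x y ⊗m idm z)
  = alpha_inv M w x (y ⊗ z) ∘ (idm w ⊗m alpha M x y z) ∘ alpha M w (x ⊗ y) z.
Proof.
  apply (cancel_l (r := alpha M w x (y ⊗ z)) (r' := alpha_inv M w x (y ⊗ z))); [apply aK|].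
  apply (cancel_r (r := alpha M w x y ⊗m idm z) (r' := alpha_inv M w x y ⊗m idm z)).
  { rewrite tml, aK', tid. reflexivity. }
  ra HC. rk HC (tml (w:=z) (alpha M w x y) (alpha_inv M w x y)). rewrite aK, tid, c1r.
  rk HC (aK' w x (y ⊗ z)). rewrite c1l. rewrite (pentagon HM). ra HC. reflexivity.
Qed.

Definition Zig1 (y s : Ob C) (ev : Hom (s ⊗ y) I) (coev : Hom I (y ⊗ s)) : Prop :=
  rho M y ∘ (idm y ⊗m ev) ∘ alpha M y s y ∘ (coev ⊗m idm y) ∘ lam_inv M y = idm y.
Definition Zig2 (y s : Ob C) (ev : Hom (s ⊗ y) I) (coev : Hom I (y ⊗ s)) : Prop :=
  lam M s ∘ (ev ⊗m idm s) ∘ alpha_inv M s y s ∘ (idm s ⊗m coev) ∘ rho_inv M s = idm s.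
Arguments Zig1 : clear implicits.
Arguments Zig2 : clear implicits.
Definition Psi (y s z : Ob C) (ev : Hom (s ⊗ y) I) (w : Hom I (y ⊗ z)) : Hom s z :=
  lam M z ∘ (ev ⊗m idm z) ∘ alpha_inv M s y z ∘ (idm s ⊗m w) ∘ rho_inv M s.
Definition Xi (y s z : Ob C) (coev : Hom I (y ⊗ s)) (u : Hom (z ⊗ y) I) : Hom z s :=
  lam M s ∘ (u ⊗m idm s) ∘ alpha_inv M z y s ∘ (idm z ⊗m coev) ∘ rho_inv M z.

Lemma PsiPhi (y s z : Ob C) ev coev (f : Hom s z) :
  Zig2 y s ev coev -> Psi ev ((idm y ⊗m f) ∘ coev) = f.
Proof.
  unfold Zig2, Psi. intro H. ran HC H. rewrite tsr. ra HC.
  rk HC (ainat (idm s) (idm y) f). rewrite tid.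
  rk HC (tmerge (idm _) ev f (idm z)).
  rewrite c1l, c1r, (t_split_rl ev f). ra HC. rk HC (lnat f).
  rewrite H, c1r. reflexivity.
Qed.

Lemma PhiPsi (y s z : Ob C) ev coev (w : Hom I (y ⊗ z)) :
  Zig1 y s ev coev -> (idm y ⊗m Psi ev w) ∘ coev = w.
Proof.
  unfold Zig1, Psi. intro H. repeat rewrite <- (comp_assoc HC) in H.
  rewrite !tsr. ra HC. rewrite K1'. ra HC. rk HC (rinat coev).
  rkr HC (anat (idm y) (idm s) w).
  rk HC (tmerge coev (idm y ⊗m idm s) (idm I) w). rewrite tid, c1l, c1r, (t_split_lr coev w).
  ra HC. rewrite <- K2'. rkr HC (linat w).
  rk HC (pent' y s y z).
  rkr HC (anat (idm y) ev (idm z)).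
  rk HC (triangle HM y z).
  rewrite <- (tid y z). rk HC (ainat coev (idm y) (idm z)). rk HC (K3' y z).
  repeat rewrite tmlk. ra HC.
  rewrite H, tid, c1l. reflexivity.
Qed.
Lemma ThetaXi (y s z : Ob C) ev coev (u : Hom (z ⊗ y) I) :
  Zig1 y s ev coev -> ev ∘ (Xi coev u ⊗m idm y) = u.
Proof.
  unfold Zig1, Xi. intro H. ran HC H.
  rewrite !tsl. ra HC. rewrite <- K3. ra HC. rkr HC (lnat ev).
  rk HC (anat u (idm s) (idm y)). rewrite (tid s y).
  rk HC (t_rl u ev). rewrite (t_split_lr u ev). ra HC.
  rewrite K2. rk HC (rnat u).
  rk HC (pent'' z y s y).
  rewrite <- (tid z y). rkr HC (ainat (idm z) (idm y) ev).
  rewrite <- K1. ra HC. rk HC (aK' z y I). rewrite c1l.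
  rk HC (anat (idm z) coev (idm y)).
  rk HC (tri' z y).
  repeat rewrite tmrk. rewrite tmr. ra HC. rewrite H, tid, c1r. reflexivity.
Qed.
Lemma Zig1_transport (y y' s s' : Ob C) (u : Hom y' y) ui (v : Hom s' s) vi ev coev :
  ui ∘ u = idm y' -> v ∘ vi = idm s ->
  Zig1 y s ev coev -> Zig1 y' s' (ev ∘ (v ⊗m u)) ((ui ⊗m vi) ∘ coev).
Proof.
  unfold Zig1. intros Hu Hv Z. ran HC Z.
  rewrite tsr, tsl. ra HC.
  rkr HC (anat (idm y') v u).
  rk HC (tmerge (ui ⊗m vi) (idm y' ⊗m v) (idm y') u).
  rewrite tmerge, c1l, Hv, c1r.
  rewrite (t_split_lr (ui ⊗m idm s) u). ra HC. rk HC (t_rl coev u). rewrite (t_split_lr coev u). ra HC.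
  rkr HC (linat u).
  rk HC (anat ui (idm s) (idm y)). rewrite (tid s y).
  rk HC (t_rl ui ev). rewrite (t_split_lr ui ev). ra HC.
  rk HC (rnat ui). rk HC Z. rewrite c1l. exact Hu.
Qed.

Lemma Zig2_transport (y y' s s' : Ob C) (u : Hom y' y) ui (v : Hom s' s) vi ev coev :
  u ∘ ui = idm y -> vi ∘ v = idm s' ->
  Zig2 y s ev coev -> Zig2 y' s' (ev ∘ (v ⊗m u)) ((ui ⊗m vi) ∘ coev).
Proof.
  unfold Zig2. intros Hu Hv Z. ran HC Z.
  rewrite tsr, tsl. ra HC.
  rkr HC (ainat v u (idm s')).
  rk HC (tmerge (idm s') v (ui ⊗m vi) (u ⊗m idm s')).
  rewrite tmerge, Hu, c1l, c1r.
  rk HC (tmerge (idm s') v coev (idm y ⊗m vi)). rewrite c1r.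
  rewrite (t_split_rl v ((idm y ⊗m vi) ∘ coev)), tsr. ra HC.
  rkr HC (rinat v).
  rk HC (ainat (idm s) (idm y) vi). rewrite (tid s y).
  rk HC (t_lr ev vi). rewrite (t_split_rl ev vi). ra HC.
  rk HC (lnat vi). rk HC Z. rewrite c1l. exact Hv.
Qed.
End Mon.

End A5.
Import A5.

Module B.
Set Implicit Arguments.
Set Default Proof Using "All".
Unset Strict Implicit.

Section Dual.
Variables (C : CatData) (HC : CatLaws C) (M : SMData C) (HM : SMLaws M)
  (A : AntiInv M) (HA : AntiInvLaws A) (D : DualData M) (HD : DualLaws D).
Local Notation "x ⊗ y" := (tens M x y) (at level 30, right associativity).
Local Notation "f ⊗m g" := (tensm M f g) (at level 30, right associativity).
Local Notation I := (munit M).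
Local Notation d := (dO A).
Local Notation dm := (dM A).
Local Notation "x ^*" := (dual D x) (at level 8).
Local Notation c1l := (@A5.c1l C HC M HM).
Local Notation c1r := (@A5.c1r C HC M HM).
Local Notation cA := (@A5.cA C HC M HM).
Local Notation aK := (@A5.aK C HC M HM).
Local Notation aK' := (@A5.aK' C HC M HM).
Local Notation lK := (@A5.lK C HC M HM).
Local Notation lK' := (@A5.lK' C HC M HM).
Local Notation rK := (@A5.rK C HC M HM).
Local Notation rK' := (@A5.rK' C HC M HM).
Local Notation sK := (@A5.sK C HC M HM).
Local Notation tcomp := (@A5.tcomp C HC M HM).
Local Notation tmerge := (@A5.tmerge C HC M HM).
Local Notation tid := (@A5.tid C HC M HM).
Local Notation tsl := (@A5.tsl C HC M HM).
Local Notation tsr := (@A5.tsr C HC M HM).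
Local Notation tml := (@A5.tml C HC M HM).
Local Notation tmr := (@A5.tmr C HC M HM).
Local Notation tmlk := (@A5.tmlk C HC M HM).
Local Notation tmrk := (@A5.tmrk C HC M HM).
Local Notation t_lr := (@A5.t_lr C HC M HM).
Local Notation t_rl := (@A5.t_rl C HC M HM).
Local Notation t_split_lr := (@A5.t_split_lr C HC M HM).
Local Notation t_split_rl := (@A5.t_split_rl C HC M HM).
Local Notation anat := (@A5.anat C HC M HM).
Local Notation ainat := (@A5.ainat C HC M HM).
Local Notation lnat := (@A5.lnat C HC M HM).
Local Notation linat := (@A5.linat C HC M HM).
Local Notation rnat := (@A5.rnat C HC M HM).
Local Notation rinat := (@A5.rinat C HC M HM).
Local Notation snat := (@A5.snat C HC M HM).
Local Notation cancel_r := (@A5.cancel_r C HC M HM).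
Local Notation cancel_l := (@A5.cancel_l C HC M HM).
Local Notation lam_faith := (@A5.lam_faith C HC M HM).
Local Notation rho_faith := (@A5.rho_faith C HC M HM).
Local Notation K3 := (@A5.K3 C HC M HM).
Local Notation K1 := (@A5.K1 C HC M HM).
Local Notation K2 := (@A5.K2 C HC M HM).
Local Notation K2' := (@A5.K2' C HC M HM).
Local Notation K1' := (@A5.K1' C HC M HM).
Local Notation K3' := (@A5.K3' C HC M HM).
Local Notation tri' := (@A5.tri' C HC M HM).
Local Notation pent' := (@A5.pent' C HC M HM).
Local Notation pent'' := (@A5.pent'' C HC M HM).
Local Notation PsiPhi := (@A5.PsiPhi C HC M HM).
Local Notation PhiPsi := (@A5.PhiPsi C HC M HM).
Local Notation ThetaXi := (@A5.ThetaXi C HC M HM).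

Lemma inv_uniq {x y : Ob C} (f : Hom x y) g g' : inverse_pair f g -> inverse_pair f g' -> g = g'.
Proof.
  intros [H1 H2] [H3 H4]. rewrite <- (c1r g), <- H4, (cA), H1, (c1l). reflexivity.
Qed.

Lemma inv_comp {x y z : Ob C} (f : Hom x y) (g : Hom y z) fi gi :
  inverse_pair f fi -> inverse_pair g gi -> inverse_pair (g ∘ f) (fi ∘ gi).
Proof.
  intros [H1 H2] [H3 H4]. split.
  - ra HC. rk HC H3. rewrite c1l; auto.
  - ra HC. rk HC H2. rewrite c1l; auto.
Qed.
Lemma inv_tens {x y z w : Ob C} (f : Hom x y) (g : Hom z w) fi gi :
  inverse_pair f fi -> inverse_pair g gi -> inverse_pair (f ⊗m g) (fi ⊗m gi).
Proof.
  intros [H1 H2] [H3 H4]. split; rewrite tmerge; auto; [rewrite H1, H3| rewrite H2, H4]; apply tid; auto.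
Qed.
Lemma inv_sym {x y : Ob C} (f : Hom x y) g : inverse_pair f g -> inverse_pair g f.
Proof. intros [H1 H2]; split; auto. Qed.

Lemma chi_inv_nat {x x' y y' : Ob C} (f : Hom x x') (g : Hom y y') :
  (dm f ⊗m dm g) ∘ chi_inv A x' y' = chi_inv A x y ∘ dm (f ⊗m g).
Proof.
  apply (cancel_l (r := chi A x y) (r' := chi_inv A x y)); [apply (chi_iso HA)|].
  rewrite (cA), (chi_nat HA). ra HC. destruct (chi_iso HA x' y') as [_ E]. rewrite E, (c1r).
  destruct (chi_iso HA x y) as [_ E']. rewrite (cA), E', (c1l). reflexivity.
Qed.

Lemma tsplit2 {x y z w v : Ob C} (f : Hom x y) (g : Hom w v) (g0 : Hom z w) :
  f ⊗m (g ∘ g0) = (f ⊗m g) ∘ (idm x ⊗m g0).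
Proof. rewrite tmerge, c1r; auto. Qed.

Lemma Psi_dualm {x y : Ob C} (f : Hom x y) :
  dualm D f = Psi (ev D y) ((f ⊗m idm (x^*)) ∘ coev D x).
Proof. unfold dualm, Psi. rewrite tsr; auto. ra HC. reflexivity. Qed.

Lemma Psi_post (y s z z' : Ob C) (ev : Hom (s ⊗ y) I) (w : Hom I (y ⊗ z)) (m : Hom z z') :
  m ∘ Psi ev w = Psi ev ((idm y ⊗m m) ∘ w).
Proof.
  unfold Psi. ra HC. rkr HC (lnat m). rk HC (t_rl ev m). rewrite (t_split_lr ev m).
  ra HC. rewrite <- (tid s y). rkr HC (ainat (idm s) (idm y) m). rewrite (tsr w). ra HC. reflexivity.
Qed.

Lemma dualm_id (x : Ob C) : dualm D (idm x) = idm (x^*).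
Proof. unfold dualm. rewrite !tid, (c1r). apply (zigzag2 HD). Qed.

Lemma dualm_comp {x y z : Ob C} (f : Hom x y) (g : Hom y z) :
  dualm D (g ∘ f) = dualm D f ∘ dualm D g.
Proof.
  rewrite (Psi_dualm (g ∘ f)), (Psi_dualm g), Psi_post. f_equal.
  rewrite (cA), (t_rl). rewrite (t_split_lr g (dualm D f)). ra HC.
  rewrite (Psi_dualm f), (PhiPsi _ (zigzag1 HD y)).
  rewrite tmlk. reflexivity.
Qed.

Lemma dualm_iso {x y : Ob C} (f : Hom x y) fi : inverse_pair f fi -> inverse_pair (dualm D f) (dualm D fi).
Proof.
  intros [H1 H2]; split; rewrite <- dualm_comp; [rewrite H2|rewrite H1]; apply dualm_id.
Qed.

Lemma KEY (c : Ob C) (h : Hom c (d c)) hi :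
  hi ∘ dualm D h = idm _ -> (h ⊗m (kappa A D c ∘ hi)) ∘ coev D c = coev_d A D c.
Proof.
  intro Hh. rewrite (t_split_rl h), tsr. ra HC.
  rewrite <- (PhiPsi ((h ⊗m idm (c^*)) ∘ coev D c) (zigzag1 HD (d c))).
  rewrite <- Psi_dualm. rewrite (tmrk (dualm D h) hi). rewrite Hh, tid, c1l.
  apply (PhiPsi _ (zigzag1 HD (d c))).
Qed.

Lemma herm_uniq (c : Ob C) (h : Hom c (d c)) (m m' : Hom (c^*) (d (c^*))) :
  is_iso h -> (h ⊗m m) ∘ coev D c = (h ⊗m m') ∘ coev D c -> m = m'.
Proof.
  intros [hinv Hh] E. rewrite (t_split_lr h m), (t_split_lr h m') in E. ran HC E.
  apply (cancel_l (r' := hinv ⊗m idm _)) in E.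
  2: { rewrite tml; auto. destruct Hh as [H1 _]. rewrite H1; apply tid; auto. }
  rewrite <- (PsiPhi m (zigzag2 HD c)), <- (PsiPhi m' (zigzag2 HD c)), E. reflexivity.
Qed.
Lemma herm_tens_inv {b c : Ob C} (k : Hom b (d b)) ki (h : Hom c (d c)) hinv :
  inverse_pair k ki -> inverse_pair h hinv ->
  inverse_pair (herm_tens k h) ((ki ⊗m hinv) ∘ chi_inv A b c).
Proof.
  intros Hk Hh. unfold herm_tens. apply inv_comp. apply inv_tens; auto.
  destruct (chi_iso HA b c) as [E1 E2]. split; auto.
Qed.

Lemma DualDagger (c : Ob C) (h : Hom c (d c)) hinv hi ki :
  inverse_pair h hinv -> hi ∘ dualm D h = idm _ -> inverse_pair (kappa A D c ∘ hi) ki ->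
  sigma M (c^*) c ∘ ((ki ⊗m hinv) ∘ chi_inv A (c^*) c ∘ dm (ev D c) ∘ chi0 A) = coev D c.
Proof.
  intros [Hh1 Hh2] Hhi [Hk1 Hk2].
  pose proof (KEY Hhi) as E.
  ra HC. rk HC (snat ki hinv).
  assert (Ec : coev_d A D c = sigma M (d (c^*)) (d c) ∘ (chi_inv A (c^*) c ∘ (dm (ev D c) ∘ chi0 A))).
  { unfold coev_d. ra HC. reflexivity. }
  rewrite <- Ec, <- E, cA, tmerge, Hh1, Hk1, tid, c1l. reflexivity.
Qed.

Lemma DualChar (c b : Ob C) (h : Hom c (d c)) hinv (k : Hom b (d b)) ki (e : Hom (b ⊗ c) I) hi :
  inverse_pair h hinv -> inverse_pair k ki -> hi ∘ dualm D h = idm _ ->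
  Zig1 e (sigma M b c ∘ ((ki ⊗m hinv) ∘ chi_inv A b c ∘ dm e ∘ chi0 A)) ->
  Zig2 e (sigma M b c ∘ ((ki ⊗m hinv) ∘ chi_inv A b c ∘ dm e ∘ chi0 A)) ->
  exists phi : Hom b (c^*), is_iso phi /\ k = transfer phi (kappa A D c ∘ hi).
Proof.
  intros Hh Hk Hhi Z1 Z2.
  set (coevb := sigma M b c ∘ ((ki ⊗m hinv) ∘ chi_inv A b c ∘ dm e ∘ chi0 A)) in *.
  set (phi := Psi (y:=c) (s:=b) (z:=c^*) e (coev D c)).
  assert (H1 : ev D c ∘ (phi ⊗m idm c) = e) by exact (ThetaXi e (zigzag1 HD c)).
  assert (H2 : (idm c ⊗m phi) ∘ coevb = coev D c) by exact (PhiPsi (coev D c) Z1).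
  set (phi' := Psi (y:=c) (s:=c^*) (z:=b) (ev D c) coevb).
  assert (H3 : (idm c ⊗m phi') ∘ coev D c = coevb) by exact (PhiPsi coevb (zigzag1 HD c)).
  assert (H4 : phi ∘ phi' = idm _).
  { transitivity (Psi (ev D c) ((idm c ⊗m (phi ∘ phi')) ∘ coev D c)).
    { symmetry; apply PsiPhi; apply HD. }
    rewrite tsr, <- cA, H3, H2. exact (zigzag2 HD c). }
  assert (H5 : phi' ∘ phi = idm _).
  { transitivity (Psi e ((idm c ⊗m (phi' ∘ phi)) ∘ coevb)).
    { symmetry; apply PsiPhi; apply Z2. }
    rewrite tsr, <- cA, H2, H3. exact Z2. }
  assert (H6 : e ∘ (phi' ⊗m idm c) = ev D c).
  { rewrite <- H1, <- cA, tml, H4, tid, c1r. reflexivity. }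
  assert (H7 : (h ⊗m (dm phi' ∘ k ∘ phi')) ∘ coev D c = coev_d A D c).
  { rewrite (tsplit2 h (dm phi' ∘ k) phi'). rewrite <- cA, H3. unfold coevb. ra HC.
    rkr HC (snat (dm phi' ∘ k) h). rk HC (tmerge ki (dm phi' ∘ k) hinv h).
    destruct Hk as [_ Hk2]. destruct Hh as [_ Hh2]. rewrite Hk2, Hh2, c1r.
    rewrite <- (dM_id HA c). rk HC (chi_inv_nat phi' (idm c)).
    rkr HC (dM_comp HA (phi' ⊗m idm c) e). rewrite H6. unfold coev_d. ra HC. reflexivity. }
  assert (H8 : kappa A D c ∘ hi = dm phi' ∘ k ∘ phi').
  { apply (herm_uniq (h := h)). exists hinv; auto. rewrite (KEY Hhi), H7. reflexivity. }
  exists phi. split. { exists phi'. split; auto. }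
  unfold transfer. rewrite H8. ra HC. rkr HC (dM_comp HA phi phi'). rewrite H5, (dM_id HA), c1l.
  rewrite c1r. reflexivity.
Qed.
End Dual.

End B.
Import B.

Module Cc.
Set Implicit Arguments.
Unset Strict Implicit.
Set Default Proof Using "All".

Section CPX.
Variables (X : SMAICD) (P : PairingSet (sA X)) (hP : PosStruct P).
Local Notation C := (sC X).
Local Notation M := (sM X).
Local Notation A := (sA X).
Local Notation D := (sD X).
Let HC : CatLaws (sC X) := sC_laws X.
Local Notation HA := (sA_laws X).
Local Notation "x ⊗ y" := (tens M x y) (at level 30, right associativity).
Local Notation "f ⊗m g" := (tensm M f g) (at level 30, right associativity).
Local Notation I := (munit M).
Local Notation d := (dO A).
Local Notation dm := (dM A).
Local Notation "x ^*" := (dual D x) (at level 8).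
Local Notation c1l := (@A5.c1l (sC X) (sC_laws X) (sM X) (sM_laws X)).
Local Notation c1r := (@A5.c1r (sC X) (sC_laws X) (sM X) (sM_laws X)).
Local Notation cA := (@A5.cA (sC X) (sC_laws X) (sM X) (sM_laws X)).
Local Notation aK := (@A5.aK (sC X) (sC_laws X) (sM X) (sM_laws X)).
Local Notation aK' := (@A5.aK' (sC X) (sC_laws X) (sM X) (sM_laws X)).
Local Notation lK := (@A5.lK (sC X) (sC_laws X) (sM X) (sM_laws X)).
Local Notation lK' := (@A5.lK' (sC X) (sC_laws X) (sM X) (sM_laws X)).
Local Notation rK := (@A5.rK (sC X) (sC_laws X) (sM X) (sM_laws X)).
Local Notation rK' := (@A5.rK' (sC X) (sC_laws X) (sM X) (sM_laws X)).
Local Notation sK := (@A5.sK (sC X) (sC_laws X) (sM X) (sM_laws X)).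
Local Notation tcomp := (@A5.tcomp (sC X) (sC_laws X) (sM X) (sM_laws X)).
Local Notation tmerge := (@A5.tmerge (sC X) (sC_laws X) (sM X) (sM_laws X)).
Local Notation tid := (@A5.tid (sC X) (sC_laws X) (sM X) (sM_laws X)).
Local Notation tsl := (@A5.tsl (sC X) (sC_laws X) (sM X) (sM_laws X)).
Local Notation tsr := (@A5.tsr (sC X) (sC_laws X) (sM X) (sM_laws X)).
Local Notation tml := (@A5.tml (sC X) (sC_laws X) (sM X) (sM_laws X)).
Local Notation tmr := (@A5.tmr (sC X) (sC_laws X) (sM X) (sM_laws X)).
Local Notation tmlk := (@A5.tmlk (sC X) (sC_laws X) (sM X) (sM_laws X)).
Local Notation tmrk := (@A5.tmrk (sC X) (sC_laws X) (sM X) (sM_laws X)).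
Local Notation t_lr := (@A5.t_lr (sC X) (sC_laws X) (sM X) (sM_laws X)).
Local Notation t_rl := (@A5.t_rl (sC X) (sC_laws X) (sM X) (sM_laws X)).
Local Notation t_split_lr := (@A5.t_split_lr (sC X) (sC_laws X) (sM X) (sM_laws X)).
Local Notation t_split_rl := (@A5.t_split_rl (sC X) (sC_laws X) (sM X) (sM_laws X)).
Local Notation anat := (@A5.anat (sC X) (sC_laws X) (sM X) (sM_laws X)).
Local Notation ainat := (@A5.ainat (sC X) (sC_laws X) (sM X) (sM_laws X)).
Local Notation lnat := (@A5.lnat (sC X) (sC_laws X) (sM X) (sM_laws X)).
Local Notation linat := (@A5.linat (sC X) (sC_laws X) (sM X) (sM_laws X)).
Local Notation rnat := (@A5.rnat (sC X) (sC_laws X) (sM X) (sM_laws X)).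
Local Notation rinat := (@A5.rinat (sC X) (sC_laws X) (sM X) (sM_laws X)).
Local Notation snat := (@A5.snat (sC X) (sC_laws X) (sM X) (sM_laws X)).
Local Notation cancel_r := (@A5.cancel_r (sC X) (sC_laws X) (sM X) (sM_laws X)).
Local Notation cancel_l := (@A5.cancel_l (sC X) (sC_laws X) (sM X) (sM_laws X)).
Local Notation lam_faith := (@A5.lam_faith (sC X) (sC_laws X) (sM X) (sM_laws X)).
Local Notation rho_faith := (@A5.rho_faith (sC X) (sC_laws X) (sM X) (sM_laws X)).
Local Notation K3 := (@A5.K3 (sC X) (sC_laws X) (sM X) (sM_laws X)).
Local Notation K1 := (@A5.K1 (sC X) (sC_laws X) (sM X) (sM_laws X)).
Local Notation K2 := (@A5.K2 (sC X) (sC_laws X) (sM X) (sM_laws X)).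
Local Notation K2' := (@A5.K2' (sC X) (sC_laws X) (sM X) (sM_laws X)).
Local Notation K1' := (@A5.K1' (sC X) (sC_laws X) (sM X) (sM_laws X)).
Local Notation K3' := (@A5.K3' (sC X) (sC_laws X) (sM X) (sM_laws X)).
Local Notation tri' := (@A5.tri' (sC X) (sC_laws X) (sM X) (sM_laws X)).
Local Notation pent' := (@A5.pent' (sC X) (sC_laws X) (sM X) (sM_laws X)).
Local Notation pent'' := (@A5.pent'' (sC X) (sC_laws X) (sM X) (sM_laws X)).
Local Notation PsiPhi := (@A5.PsiPhi (sC X) (sC_laws X) (sM X) (sM_laws X)).
Local Notation PhiPsi := (@A5.PhiPsi (sC X) (sC_laws X) (sM X) (sM_laws X)).
Local Notation ThetaXi := (@A5.ThetaXi (sC X) (sC_laws X) (sM X) (sM_laws X)).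
Local Notation Zig1_transport := (@A5.Zig1_transport (sC X) (sC_laws X) (sM X) (sM_laws X)).
Local Notation Zig2_transport := (@A5.Zig2_transport (sC X) (sC_laws X) (sM X) (sM_laws X)).
Local Notation inv_uniq := (@B.inv_uniq (sC X) (sC_laws X) (sM X) (sM_laws X) (sA X) (sA_laws X) (sD X) (sD_laws X)).
Local Notation inv_comp := (@B.inv_comp (sC X) (sC_laws X) (sM X) (sM_laws X) (sA X) (sA_laws X) (sD X) (sD_laws X)).
Local Notation inv_tens := (@B.inv_tens (sC X) (sC_laws X) (sM X) (sM_laws X) (sA X) (sA_laws X) (sD X) (sD_laws X)).
Local Notation inv_sym := (@B.inv_sym (sC X) (sC_laws X) (sM X) (sM_laws X) (sA X) (sA_laws X) (sD X) (sD_laws X)).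
Local Notation chi_inv_nat := (@B.chi_inv_nat (sC X) (sC_laws X) (sM X) (sM_laws X) (sA X) (sA_laws X) (sD X) (sD_laws X)).
Local Notation tsplit2 := (@B.tsplit2 (sC X) (sC_laws X) (sM X) (sM_laws X) (sA X) (sA_laws X) (sD X) (sD_laws X)).
Local Notation Psi_dualm := (@B.Psi_dualm (sC X) (sC_laws X) (sM X) (sM_laws X) (sA X) (sA_laws X) (sD X) (sD_laws X)).
Local Notation Psi_post := (@B.Psi_post (sC X) (sC_laws X) (sM X) (sM_laws X) (sA X) (sA_laws X) (sD X) (sD_laws X)).
Local Notation dualm_id := (@B.dualm_id (sC X) (sC_laws X) (sM X) (sM_laws X) (sA X) (sA_laws X) (sD X) (sD_laws X)).
Local Notation dualm_comp := (@B.dualm_comp (sC X) (sC_laws X) (sM X) (sM_laws X) (sA X) (sA_laws X) (sD X) (sD_laws X)).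
Local Notation dualm_iso := (@B.dualm_iso (sC X) (sC_laws X) (sM X) (sM_laws X) (sA X) (sA_laws X) (sD X) (sD_laws X)).
Local Notation KEY := (@B.KEY (sC X) (sC_laws X) (sM X) (sM_laws X) (sA X) (sA_laws X) (sD X) (sD_laws X)).
Local Notation herm_uniq := (@B.herm_uniq (sC X) (sC_laws X) (sM X) (sM_laws X) (sA X) (sA_laws X) (sD X) (sD_laws X)).
Local Notation herm_tens_inv := (@B.herm_tens_inv (sC X) (sC_laws X) (sM X) (sM_laws X) (sA X) (sA_laws X) (sD X) (sD_laws X)).
Local Notation DualDagger := (@B.DualDagger (sC X) (sC_laws X) (sM X) (sM_laws X) (sA X) (sA_laws X) (sD X) (sD_laws X)).
Local Notation DualChar := (@B.DualChar (sC X) (sC_laws X) (sM X) (sM_laws X) (sA X) (sA_laws X) (sD X) (sD_laws X)).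
Lemma ph_iso (a : PObj P) : exists hai, inverse_pair (ph a) hai.
Proof. destruct (pos_herm hP (pin a)) as [[g Hg] _]. eauto. Qed.

Lemma dag_exists (a b : PObj P) f : exists g, is_dagger a b f g.
Proof. destruct (ph_iso a) as [hai H]. exists (hai ∘ dm f ∘ ph b). exists hai. auto. Qed.

Lemma dag_uniq (a b : PObj P) f g g' : is_dagger a b f g -> is_dagger a b f g' -> g = g'.
Proof. intros [h1 [H1 ->]] [h2 [H2 ->]]. rewrite (inv_uniq H1 H2). reflexivity. Qed.

Lemma dag_comp (a b c : PObj P) f f' g g' :
  is_dagger a b f f' -> is_dagger b c g g' -> is_dagger a c (g ∘ f) (f' ∘ g').
Proof.
  intros [ha [Ha ->]] [hb [Hb ->]]. exists ha. split; auto.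
  rewrite (dM_comp HA). ra HC. destruct Hb as [_ Hb2]. rk HC Hb2. rewrite c1l. reflexivity.
Qed.

Lemma dag_tens (a a' b b' : PObj P) f f' g g' :
  is_dagger a b f f' -> is_dagger a' b' g g' ->
  is_dagger (ptens hP a a') (ptens hP b b') (f ⊗m g) (f' ⊗m g').
Proof.
  intros [ha [Ha ->]] [ha' [Ha' ->]].
  exists ((ha ⊗m ha') ∘ chi_inv A (pob a) (pob a')). split.
  { apply herm_tens_inv; auto. }
  cbn. unfold herm_tens. ra HC. rkr HC (chi_nat HA f g).
  destruct (chi_iso HA (pob a) (pob a')) as [E1 _]. rk HC E1. rewrite c1l.
  rewrite !tmerge. ra HC. reflexivity.
Qed.

Lemma dag_sigma (a b : PObj P) :
  is_dagger (ptens hP a b) (ptens hP b a) (sigma M (pob a) (pob b)) (sigma M (pob b) (pob a)).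
Proof.
  destruct (ph_iso a) as [ha Ha]. destruct (ph_iso b) as [hb Hb].
  exists ((ha ⊗m hb) ∘ chi_inv A (pob a) (pob b)). split.
  { apply herm_tens_inv; auto. }
  cbn. unfold herm_tens. ra HC. rkr HC (chi_sym HA (pob b) (pob a)).
  destruct (chi_iso HA (pob a) (pob b)) as [E1 _]. rk HC E1. rewrite c1l.
  rkr HC (snat hb ha). rewrite tmerge. destruct Ha as [Ha1 _]. destruct Hb as [Hb1 _].
  rewrite Ha1, Hb1, tid, c1r. reflexivity.
Qed.

Lemma dag_id (a : PObj P) : is_dagger a a (idm _) (idm _).
Proof.
  destruct (ph_iso a) as [ha Ha]. exists ha. split; auto.
  rewrite (dM_id HA), c1r. destruct Ha as [Ha1 _]. rewrite Ha1. reflexivity.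
Qed.

Lemma dag_unitary_sym (a b : PObj P) u v : is_dagger a b u v -> inverse_pair u v -> is_dagger b a v u.
Proof.
  intros [ha [Ha Ev]] [Hvu Huv].
  destruct (ph_iso b) as [hb Hb]. exists hb. split; auto.
  assert (E : dm v ∘ ph a = ph b ∘ u).
  { rewrite <- (c1r (dm v ∘ ph a)), <- Hvu. rewrite Ev at 2. ra HC.
    destruct Ha as [_ Ha2]. rk HC Ha2. rewrite c1l. rkr HC (dM_comp HA v u). rewrite Huv, (dM_id HA), c1l.
    reflexivity. }
  rewrite <- cA, E, cA. destruct Hb as [Hb1 _]. rewrite Hb1, c1l. reflexivity.
Qed.

Definition DDual (a b : PObj P) : Prop :=
  exists (e : Hom (pob b ⊗ pob a) I) (e' : Hom I (pob b ⊗ pob a)),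
    is_dagger (ptens hP b a) (punit hP) e e' /\
    Zig1 e (sigma M (pob b) (pob a) ∘ e') /\ Zig2 e (sigma M (pob b) (pob a) ∘ e').

Lemma DDual_unitary (a b a' b' : PObj P) u ui v vi :
  DDual a b -> is_dagger a' a u ui -> inverse_pair u ui ->
  is_dagger b' b v vi -> inverse_pair v vi -> DDual a' b'.
Proof.
  intros [e [e' [He [Z1 Z2]]]] Hu [Hu1 Hu2] Hv [Hv1 Hv2].
  exists (e ∘ (v ⊗m u)), ((vi ⊗m ui) ∘ e'). split.
  { apply (dag_comp (a := ptens hP b' a') (b := ptens hP b a) (c := punit hP)); auto. apply dag_tens; auto. }
  assert (Es : sigma M (pob b') (pob a') ∘ ((vi ⊗m ui) ∘ e') = (ui ⊗m vi) ∘ (sigma M (pob b) (pob a) ∘ e')).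
  { rewrite !cA, snat. reflexivity. }
  rewrite Es. split.
  - apply Zig1_transport; auto.
  - apply Zig2_transport; auto.
Qed.
Lemma transfer_id {c : Ob C} (k : Hom c (d c)) : transfer (idm c) k = k.
Proof. unfold transfer. rewrite (dM_id HA), c1l, c1r. reflexivity. Qed.

Lemma transfer_inv {c c' : Ob C} (g : Hom c' c) gi (k : Hom c (d c)) :
  inverse_pair g gi -> transfer gi (transfer g k) = k.
Proof.
  intros [_ H2]. unfold transfer. ra HC. rkr HC (dM_comp HA gi g). rewrite H2, (dM_id HA), c1l.
  rewrite c1r. reflexivity.
Qed.

Lemma transfer_dagger (b b0 : PObj P) g gi :
  inverse_pair g gi -> ph b = transfer g (ph b0) -> is_dagger b b0 g gi.
Proof.
  intros [G1 G2] E. destruct (ph_iso b) as [hbi [Hb1 Hb2]]. exists hbi. split; [split; auto|].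
  transitivity (hbi ∘ ph b ∘ gi). { rewrite Hb1, c1l. reflexivity. }
  rewrite E. unfold transfer. ra HC. rewrite G2, c1r. reflexivity.
Qed.

Lemma DD_of_dual (a : PObj P) hi (Hhi : inverse_pair (dualm D (ph a)) hi)
  (pk : @P ((pob a) ^*) (kappa A D (pob a) ∘ hi)) :
  DDual a {| pob := (pob a) ^*; ph := kappa A D (pob a) ∘ hi; pin := pk |}.
Proof.
  destruct (ph_iso a) as [hinv Hh]. destruct (pos_herm hP pk) as [[ki Hk] _].
  exists (ev D (pob a)), ((ki ⊗m hinv) ∘ chi_inv A _ _ ∘ dm (ev D _) ∘ chi0 A). split.
  { exists ((ki ⊗m hinv) ∘ chi_inv A _ _). split. apply herm_tens_inv; auto. reflexivity. }
  cbn. rewrite (DualDagger Hh (proj1 Hhi) Hk). split; [apply (zigzag1 (sD_laws X))|apply (zigzag2 (sD_laws X))].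
Qed.

Definition DD_all : Prop :=
  (forall a : PObj P, exists b, DDual a b) /\ (forall b : PObj P, exists a, DDual a b).

Lemma DDual_char (a b : PObj P) hi :
  DDual a b -> inverse_pair (dualm D (ph a)) hi ->
  exists phi : Hom (pob b) ((pob a) ^*), is_iso phi /\ ph b = transfer phi (kappa A D (pob a) ∘ hi).
Proof.
  intros [e [e' [[hai [Hai Ee']] [Z1 Z2]]]] Hhi.
  destruct (ph_iso a) as [hinv Hh]. destruct (ph_iso b) as [kbi Hk].
  assert (Ehai : hai = (kbi ⊗m hinv) ∘ chi_inv A (pob b) (pob a)).
  { apply (inv_uniq Hai). apply herm_tens_inv; auto. }
  rewrite Ee', Ehai in Z1, Z2. cbn in Z1, Z2.
  exact (DualChar Hh Hk (proj1 Hhi) Z1 Z2).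
Qed.

Lemma char : pairing_set_eq (Pstar D P) P <-> DD_all.
Proof.
  split.
  - intro Heq. 
    assert (Hd : forall (a : PObj P) hi, inverse_pair (dualm D (ph a)) hi -> @P ((pob a) ^*) (kappa A D (pob a) ∘ hi)).
    { intros a hi Hhi. apply Heq. exists (pob a), (ph a), (kappa A D (pob a) ∘ hi). split; [apply pin|].
      split. { exists hi. split; auto. }
      exists (idm _). split. { exists (idm _). split; apply c1l. } symmetry; apply transfer_id. }
    split.
    + intro a. destruct (ph_iso a) as [hinv Hh].
      pose proof (dualm_iso Hh) as Hhi.
      exists {| pob := (pob a) ^*; ph := kappa A D (pob a) ∘ dualm D hinv; pin := Hd a _ Hhi |}.
      apply DD_of_dual; auto.
    + intro b. pose proof (proj2 (Heq _ _) (pin b)) as Hs.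
      destruct Hs as [c [h [k [Hch [[hi [Hhi Ek]] [g [[gi Hg] Eg]]]]]]].
      set (a := {| pob := c; ph := h; pin := Hch |}).
      assert (pk : @P (c ^*) k).
      { apply Heq. exists c, h, k. split; auto. split. { exists hi; auto. }
        exists (idm _). split. { exists (idm _). split; apply c1l. } symmetry; apply transfer_id. }
      set (b0 := {| pob := c ^*; ph := k; pin := pk |}).
      exists a. 
      assert (H0 : DDual a b0).
      { subst b0. revert pk. rewrite Ek. intro pk. apply (DD_of_dual (a := a) Hhi). }
      apply (DDual_unitary (a := a) (b := b0) (u := idm _) (ui := idm _) (v := g) (vi := gi)); auto.
      * apply dag_id.
      * split; apply c1l.
      * apply transfer_dagger; auto.
  - intros [HD1 HD2] c k. split.
    + intros [c0 [h [k0 [Hch [[hi [Hhi Ek]] [g [Hg Eg]]]]]]].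
      set (a := {| pob := c0; ph := h; pin := Hch |}).
      destruct (HD1 a) as [b Hab].
      destruct (DDual_char (a := a) Hab Hhi) as [phi [[phii Hphi] Eb]].
      subst k0 k. apply (pos_trans hP); [|exact Hg].
      assert (E2 : kappa A D c0 ∘ hi = transfer phii (ph b)).
      { rewrite Eb. symmetry. apply transfer_inv. exact Hphi. }
      rewrite E2. apply (pos_trans hP). apply pin. exists phi. apply inv_sym; exact Hphi.
    + intro Hk. set (b := {| pob := c; ph := k; pin := Hk |}).
      destruct (HD2 b) as [a Hab]. destruct (ph_iso a) as [hinv Hh].
      pose proof (dualm_iso Hh) as Hhi.
      destruct (DDual_char Hab Hhi) as [phi [Hphi Eb]].
      exists (pob a), (ph a), (kappa A D (pob a) ∘ dualm D hinv). split; [apply pin|].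
      split. { exists (dualm D hinv). split; auto. }
      exists phi. split; auto.
Qed.
End CPX.

End Cc.
Import Cc.

Module Tr.
Set Implicit Arguments.
Unset Strict Implicit.
Set Default Proof Using "All".

Section Tr.
Variables (X Y : SMAICD) (P : PairingSet (sA X)) (hP : PosStruct P)
  (Q : PairingSet (sA Y)) (hQ : PosStruct Q) (E : SMDaggerEquivalence X Y P hP Q hQ).
Let HCX : CatLaws (sC X) := sC_laws X.
Let HCY : CatLaws (sC Y) := sC_laws Y.
Local Notation FF := (F X Y P hP Q hQ E).
Local Notation Fm := (Fm X Y P hP Q hQ E).
Local Notation mu := (mu X Y P hP Q hQ E).
Local Notation mu0 := (mu0 X Y P hP Q hQ E).
Local Notation FC := (F_comp X Y P hP Q hQ E).
Local Notation MX := (sM X).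
Local Notation MY := (sM Y).
Local Notation pu := (punit hP).
Local Notation "f ⊗Y g" := (tensm (sM Y) f g) (at level 30, right associativity).
Local Notation "f ⊗X g" := (tensm (sM X) f g) (at level 30, right associativity).
Local Notation "x ⊗x y" := (tens (sM X) x y) (at level 30, right associativity).
Local Notation pt := (ptens hP).
Local Notation c1lX := (@A5.c1l (sC X) (sC_laws X) (sM X) (sM_laws X)).
Local Notation c1rX := (@A5.c1r (sC X) (sC_laws X) (sM X) (sM_laws X)).
Local Notation cAX := (@A5.cA (sC X) (sC_laws X) (sM X) (sM_laws X)).
Local Notation aKX := (@A5.aK (sC X) (sC_laws X) (sM X) (sM_laws X)).
Local Notation aK'X := (@A5.aK' (sC X) (sC_laws X) (sM X) (sM_laws X)).
Local Notation lKX := (@A5.lK (sC X) (sC_laws X) (sM X) (sM_laws X)).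
Local Notation lK'X := (@A5.lK' (sC X) (sC_laws X) (sM X) (sM_laws X)).
Local Notation rKX := (@A5.rK (sC X) (sC_laws X) (sM X) (sM_laws X)).
Local Notation rK'X := (@A5.rK' (sC X) (sC_laws X) (sM X) (sM_laws X)).
Local Notation sKX := (@A5.sK (sC X) (sC_laws X) (sM X) (sM_laws X)).
Local Notation tcompX := (@A5.tcomp (sC X) (sC_laws X) (sM X) (sM_laws X)).
Local Notation tmergeX := (@A5.tmerge (sC X) (sC_laws X) (sM X) (sM_laws X)).
Local Notation tidX := (@A5.tid (sC X) (sC_laws X) (sM X) (sM_laws X)).
Local Notation tslX := (@A5.tsl (sC X) (sC_laws X) (sM X) (sM_laws X)).
Local Notation tsrX := (@A5.tsr (sC X) (sC_laws X) (sM X) (sM_laws X)).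
Local Notation tmlX := (@A5.tml (sC X) (sC_laws X) (sM X) (sM_laws X)).
Local Notation tmrX := (@A5.tmr (sC X) (sC_laws X) (sM X) (sM_laws X)).
Local Notation tmlkX := (@A5.tmlk (sC X) (sC_laws X) (sM X) (sM_laws X)).
Local Notation tmrkX := (@A5.tmrk (sC X) (sC_laws X) (sM X) (sM_laws X)).
Local Notation t_lrX := (@A5.t_lr (sC X) (sC_laws X) (sM X) (sM_laws X)).
Local Notation t_rlX := (@A5.t_rl (sC X) (sC_laws X) (sM X) (sM_laws X)).
Local Notation t_split_lrX := (@A5.t_split_lr (sC X) (sC_laws X) (sM X) (sM_laws X)).
Local Notation t_split_rlX := (@A5.t_split_rl (sC X) (sC_laws X) (sM X) (sM_laws X)).
Local Notation anatX := (@A5.anat (sC X) (sC_laws X) (sM X) (sM_laws X)).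
Local Notation ainatX := (@A5.ainat (sC X) (sC_laws X) (sM X) (sM_laws X)).
Local Notation lnatX := (@A5.lnat (sC X) (sC_laws X) (sM X) (sM_laws X)).
Local Notation linatX := (@A5.linat (sC X) (sC_laws X) (sM X) (sM_laws X)).
Local Notation rnatX := (@A5.rnat (sC X) (sC_laws X) (sM X) (sM_laws X)).
Local Notation rinatX := (@A5.rinat (sC X) (sC_laws X) (sM X) (sM_laws X)).
Local Notation snatX := (@A5.snat (sC X) (sC_laws X) (sM X) (sM_laws X)).
Local Notation cancel_rX := (@A5.cancel_r (sC X) (sC_laws X) (sM X) (sM_laws X)).
Local Notation cancel_lX := (@A5.cancel_l (sC X) (sC_laws X) (sM X) (sM_laws X)).
Local Notation c1lY := (@A5.c1l (sC Y) (sC_laws Y) (sM Y) (sM_laws Y)).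
Local Notation c1rY := (@A5.c1r (sC Y) (sC_laws Y) (sM Y) (sM_laws Y)).
Local Notation cAY := (@A5.cA (sC Y) (sC_laws Y) (sM Y) (sM_laws Y)).
Local Notation aKY := (@A5.aK (sC Y) (sC_laws Y) (sM Y) (sM_laws Y)).
Local Notation aK'Y := (@A5.aK' (sC Y) (sC_laws Y) (sM Y) (sM_laws Y)).
Local Notation lKY := (@A5.lK (sC Y) (sC_laws Y) (sM Y) (sM_laws Y)).
Local Notation lK'Y := (@A5.lK' (sC Y) (sC_laws Y) (sM Y) (sM_laws Y)).
Local Notation rKY := (@A5.rK (sC Y) (sC_laws Y) (sM Y) (sM_laws Y)).
Local Notation rK'Y := (@A5.rK' (sC Y) (sC_laws Y) (sM Y) (sM_laws Y)).
Local Notation sKY := (@A5.sK (sC Y) (sC_laws Y) (sM Y) (sM_laws Y)).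
Local Notation tcompY := (@A5.tcomp (sC Y) (sC_laws Y) (sM Y) (sM_laws Y)).
Local Notation tmergeY := (@A5.tmerge (sC Y) (sC_laws Y) (sM Y) (sM_laws Y)).
Local Notation tidY := (@A5.tid (sC Y) (sC_laws Y) (sM Y) (sM_laws Y)).
Local Notation tslY := (@A5.tsl (sC Y) (sC_laws Y) (sM Y) (sM_laws Y)).
Local Notation tsrY := (@A5.tsr (sC Y) (sC_laws Y) (sM Y) (sM_laws Y)).
Local Notation tmlY := (@A5.tml (sC Y) (sC_laws Y) (sM Y) (sM_laws Y)).
Local Notation tmrY := (@A5.tmr (sC Y) (sC_laws Y) (sM Y) (sM_laws Y)).
Local Notation tmlkY := (@A5.tmlk (sC Y) (sC_laws Y) (sM Y) (sM_laws Y)).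
Local Notation tmrkY := (@A5.tmrk (sC Y) (sC_laws Y) (sM Y) (sM_laws Y)).
Local Notation t_lrY := (@A5.t_lr (sC Y) (sC_laws Y) (sM Y) (sM_laws Y)).
Local Notation t_rlY := (@A5.t_rl (sC Y) (sC_laws Y) (sM Y) (sM_laws Y)).
Local Notation t_split_lrY := (@A5.t_split_lr (sC Y) (sC_laws Y) (sM Y) (sM_laws Y)).
Local Notation t_split_rlY := (@A5.t_split_rl (sC Y) (sC_laws Y) (sM Y) (sM_laws Y)).
Local Notation anatY := (@A5.anat (sC Y) (sC_laws Y) (sM Y) (sM_laws Y)).
Local Notation ainatY := (@A5.ainat (sC Y) (sC_laws Y) (sM Y) (sM_laws Y)).
Local Notation lnatY := (@A5.lnat (sC Y) (sC_laws Y) (sM Y) (sM_laws Y)).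
Local Notation linatY := (@A5.linat (sC Y) (sC_laws Y) (sM Y) (sM_laws Y)).
Local Notation rnatY := (@A5.rnat (sC Y) (sC_laws Y) (sM Y) (sM_laws Y)).
Local Notation rinatY := (@A5.rinat (sC Y) (sC_laws Y) (sM Y) (sM_laws Y)).
Local Notation snatY := (@A5.snat (sC Y) (sC_laws Y) (sM Y) (sM_laws Y)).
Local Notation cancel_rY := (@A5.cancel_r (sC Y) (sC_laws Y) (sM Y) (sM_laws Y)).
Local Notation cancel_lY := (@A5.cancel_l (sC Y) (sC_laws Y) (sM Y) (sM_laws Y)).
Lemma FCk (a b c : PObj P) (f : Hom (pob a) (pob b)) (g : Hom (pob b) (pob c)) w (k : Hom w (pob (FF a))) :
  Fm b c g ∘ (Fm a b f ∘ k) = Fm a c (g ∘ f) ∘ k.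
Proof. rewrite FC, cAY. reflexivity. Qed.

Lemma Fm_id' (a : PObj P) (f : Hom (pob a) (pob a)) : f = idm _ -> Fm a a f = idm _.
Proof. intros ->. apply (F_id X Y P hP Q hQ E). Qed.

Lemma mu_nat_l (a b b' : PObj P) (g : Hom (pob b) (pob b')) :
  mu a b' ∘ (idm (pob (FF a)) ⊗Y Fm b b' g) = Fm (pt a b) (pt a b') (idm (pob a) ⊗X g) ∘ mu a b.
Proof. rewrite <- (F_id X Y P hP Q hQ E a). apply (mu_nat X Y P hP Q hQ E). Qed.
Lemma mu_nat_r (a a' b : PObj P) (f : Hom (pob a) (pob a')) :
  mu a' b ∘ (Fm a a' f ⊗Y idm (pob (FF b))) = Fm (pt a b) (pt a' b) (f ⊗X idm (pob b)) ∘ mu a b.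
Proof. rewrite <- (F_id X Y P hP Q hQ E b). apply (mu_nat X Y P hP Q hQ E). Qed.

Lemma F_lunit_inv (a : PObj P) :
  mu pu a ∘ (mu0 ⊗Y idm _) ∘ lam_inv MY (pob (FF a)) = Fm a (pt pu a) (lam_inv MX (pob a)).
Proof.
  apply (cancel_lY (r := Fm (pt pu a) a (lam MX (pob a))) (r' := Fm a (pt pu a) (lam_inv MX (pob a)))).
  { rewrite <- FC; apply Fm_id'; apply lKX. }
  rewrite <- FC, Fm_id' by apply lK'X. ra HCY.
  rk HCY (F_lunit X Y P hP Q hQ E a). rewrite lK'Y. reflexivity.
Qed.
Lemma F_runit_inv (a : PObj P) :
  mu a pu ∘ (idm _ ⊗Y mu0) ∘ rho_inv MY (pob (FF a)) = Fm a (pt a pu) (rho_inv MX (pob a)).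
Proof.
  apply (cancel_lY (r := Fm (pt a pu) a (rho MX (pob a))) (r' := Fm a (pt a pu) (rho_inv MX (pob a)))).
  { rewrite <- FC; apply Fm_id'; apply rKX. }
  rewrite <- FC, Fm_id' by apply rK'X. ra HCY.
  rk HCY (F_runit X Y P hP Q hQ E a). rewrite rK'Y. reflexivity.
Qed.
Lemma F_assoc_inv (a b c : PObj P) :
  mu (pt a b) c ∘ (mu a b ⊗Y idm _) ∘ alpha_inv MY _ _ _
  = Fm (pt a (pt b c)) (pt (pt a b) c) (alpha_inv MX (pob a) (pob b) (pob c)) ∘ mu a (pt b c) ∘ (idm _ ⊗Y mu b c).
Proof.
  apply (cancel_lY (r := Fm (pt (pt a b) c) (pt a (pt b c)) (alpha MX (pob a) (pob b) (pob c)))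
                   (r' := Fm (pt a (pt b c)) (pt (pt a b) c) (alpha_inv MX (pob a) (pob b) (pob c)))).
  { rewrite <- FC; apply Fm_id'; apply aKX. }
  ra HCY. rk HCY (F_assoc X Y P hP Q hQ E a b c). rewrite aK'Y, c1rY.
  rewrite FCk, Fm_id' by apply aK'X. rewrite c1lY. reflexivity.
Qed.
Lemma TZ1 (a b : PObj P) (e : Hom (pob b ⊗x pob a) (munit MX)) (c : Hom (munit MX) (pob a ⊗x pob b)) mui_ab mu0i :
  inverse_pair (mu a b) mui_ab -> inverse_pair mu0 mu0i ->
  rho MY (pob (FF a)) ∘ (idm _ ⊗Y (mu0i ∘ Fm (pt b a) pu e ∘ mu b a)) ∘ alpha MY _ _ _
    ∘ ((mui_ab ∘ Fm pu (pt a b) c ∘ mu0) ⊗Y idm _) ∘ lam_inv MY _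
  = Fm a a (rho MX (pob a) ∘ (idm _ ⊗X e) ∘ alpha MX _ _ _ ∘ (c ⊗X idm _) ∘ lam_inv MX _).
Proof.
  intros [_ Hm] [_ H0].
  rewrite (FC a (pt pu a) a), (FC (pt pu a) (pt (pt a b) a) a), (FC (pt (pt a b) a) (pt a (pt b a)) a),
    (FC (pt a (pt b a)) (pt a pu) a).
  rewrite <- (F_runit X Y P hP Q hQ E a). ra HCY.
  rewrite tmrkY. rk HCY H0. rewrite c1lY, tsrY. ra HCY.
  rk HCY (@mu_nat_l a (pt b a) pu e).
  rkr HCY (F_assoc X Y P hP Q hQ E a b a).
  rewrite tmlkY. rk HCY Hm. rewrite c1lY, tslY. ra HCY.
  rk HCY (@mu_nat_r pu (pt a b) a c).
  rk HCY (F_lunit_inv a). reflexivity.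
Qed.
Lemma TZ2 (a b : PObj P) (e : Hom (pob b ⊗x pob a) (munit MX)) (c : Hom (munit MX) (pob a ⊗x pob b)) mui_ab mu0i :
  inverse_pair (mu a b) mui_ab -> inverse_pair mu0 mu0i ->
  lam MY (pob (FF b)) ∘ ((mu0i ∘ Fm (pt b a) pu e ∘ mu b a) ⊗Y idm _) ∘ alpha_inv MY _ _ _
    ∘ (idm _ ⊗Y (mui_ab ∘ Fm pu (pt a b) c ∘ mu0)) ∘ rho_inv MY _
  = Fm b b (lam MX (pob b) ∘ (e ⊗X idm _) ∘ alpha_inv MX _ _ _ ∘ (idm _ ⊗X c) ∘ rho_inv MX _).
Proof.
  intros [_ Hm] [_ H0].
  rewrite (FC b (pt b pu) b), (FC (pt b pu) (pt b (pt a b)) b), (FC (pt b (pt a b)) (pt (pt b a) b) b),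
    (FC (pt (pt b a) b) (pt pu b) b).
  rewrite <- (F_lunit X Y P hP Q hQ E b). ra HCY.
  rewrite tmlkY. rk HCY H0. rewrite c1lY, tslY. ra HCY.
  rk HCY (@mu_nat_r (pt b a) pu b e).
  rk HCY (F_assoc_inv b a b).
  rewrite tmrkY. rk HCY Hm. rewrite c1lY, tsrY. ra HCY.
  rk HCY (@mu_nat_l b pu (pt a b) c).
  rk HCY (F_runit_inv b). reflexivity.
Qed.
Lemma TDag (a b : PObj P) e e' mui_ba mu0i :
  is_dagger (pt b a) pu e e' ->
  is_dagger (ptens hQ (FF b) (FF a)) (FF (pt b a)) (mu b a) mui_ba ->
  is_dagger (punit hQ) (FF pu) mu0 mu0i -> inverse_pair mu0 mu0i ->
  is_dagger (ptens hQ (FF b) (FF a)) (punit hQ) (mu0i ∘ Fm (pt b a) pu e ∘ mu b a) (mui_ba ∘ Fm pu (pt b a) e' ∘ mu0).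
Proof.
  intros He Hm H0 I0.
  rewrite <- cAY. apply (dag_comp hQ (a := ptens hQ (FF b) (FF a)) (b := FF pu) (c := punit hQ)).
  2: apply (dag_unitary_sym hQ); auto.
  apply (dag_comp hQ (a := ptens hQ (FF b) (FF a)) (b := FF (pt b a)) (c := FF pu)); auto.
  apply (F_dagger X Y P hP Q hQ E); auto.
Qed.

Lemma TCoev (a b : PObj P) e' mui_ab mui_ba :
  inverse_pair (mu a b) mui_ab -> inverse_pair (mu b a) mui_ba ->
  sigma MY (pob (FF b)) (pob (FF a)) ∘ (mui_ba ∘ Fm pu (pt b a) e' ∘ mu0)
  = mui_ab ∘ Fm pu (pt a b) (sigma MX (pob b) (pob a) ∘ e') ∘ mu0.
Proof.
  intros [Hab1 Hab2] [Hba1 Hba2].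
  rewrite (FC pu (pt b a) (pt a b)). ra HCY.
  assert (S : sigma MY (pob (FF b)) (pob (FF a)) ∘ mui_ba = mui_ab ∘ Fm (pt b a) (pt a b) (sigma MX (pob b) (pob a))).
  { symmetry. rewrite <- (c1rY (mui_ab ∘ _)), <- Hba2. ra HCY.
    rk HCY (F_sym X Y P hP Q hQ E b a). rk HCY Hab1. rewrite c1lY. reflexivity. }
  rk HCY S. reflexivity.
Qed.

Lemma DDual_F (a b : PObj P) : DDual hP a b -> DDual hQ (FF a) (FF b).
Proof.
  intros [e [e' [He [Z1 Z2]]]].
  destruct (mu_unitary X Y P hP Q hQ E a b) as [mui_ab [Dab Iab]].
  destruct (mu_unitary X Y P hP Q hQ E b a) as [mui_ba [Dba Iba]].
  destruct (mu0_unitary X Y P hP Q hQ E) as [mu0i [D0 I0]].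
  exists (mu0i ∘ Fm (pt b a) pu e ∘ mu b a), (mui_ba ∘ Fm pu (pt b a) e' ∘ mu0). split.
  { apply TDag; auto. }
  pose proof (TCoev e' Iab Iba) as Hc.
  pose proof (TZ1 e (sigma MX (pob b) (pob a) ∘ e') Iab I0) as T1.
  pose proof (TZ2 e (sigma MX (pob b) (pob a) ∘ e') Iab I0) as T2.
  unfold Zig1, Zig2 in *. cbn [pob punit ptens] in *. rewrite Hc. split.
  - rewrite T1, Z1. apply (F_id X Y P hP Q hQ E).
  - rewrite T2, Z2. apply (F_id X Y P hP Q hQ E).
Qed.

Lemma DDual_Frefl (a b : PObj P) : DDual hQ (FF a) (FF b) -> DDual hP a b.
Proof.
  intros [E0 [E0' [HE [Z1 Z2]]]].
  destruct (mu_unitary X Y P hP Q hQ E a b) as [mui_ab [Dab Iab]].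
  destruct (mu_unitary X Y P hP Q hQ E b a) as [mui_ba [Dba Iba]].
  destruct (mu0_unitary X Y P hP Q hQ E) as [mu0i [D0 I0]].
  destruct (F_full X Y P hP Q hQ E (pt b a) pu (mu0 ∘ E0 ∘ mui_ba)) as [e He].
  assert (EE : E0 = mu0i ∘ Fm (pt b a) pu e ∘ mu b a).
  { rewrite He. ra HCY. destruct Iba as [Iba1 _]. destruct I0 as [I01 _]. cbn [pob punit ptens] in *.
    rk HCY Iba1. rewrite c1rY.
    rk HCY I01. rewrite c1lY. reflexivity. }
  destruct (dag_exists hP (a := pt b a) (b := pu) e) as [e' He'].
  assert (EE' : E0' = mui_ba ∘ Fm pu (pt b a) e' ∘ mu0).
  { apply (dag_uniq hQ HE). rewrite EE. apply TDag; auto. }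
  exists e, e'. split; auto.
  pose proof (TCoev e' Iab Iba) as Hc.
  pose proof (TZ1 e (sigma MX (pob b) (pob a) ∘ e') Iab I0) as T1.
  pose proof (TZ2 e (sigma MX (pob b) (pob a) ∘ e') Iab I0) as T2.
  subst E0 E0'. unfold Zig1, Zig2 in *. cbn [pob punit ptens] in *. rewrite Hc in Z1, Z2. split.
  - apply (F_faithful X Y P hP Q hQ E a a). rewrite <- T1, Z1.
    symmetry. apply (F_id X Y P hP Q hQ E).
  - apply (F_faithful X Y P hP Q hQ E b b). rewrite <- T2, Z2.
    symmetry. apply (F_id X Y P hP Q hQ E).
Qed.

Lemma idinv (Z : SMAICD) (x : Ob (sC Z)) : inverse_pair (idm x) (idm x).
Proof. split; apply (comp_idl (sC_laws Z)). Qed.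

Lemma DD_transport : DD_all hP <-> DD_all hQ.
Proof.
  split.
  - intros [H1 H2]. split.
    + intro a'. destruct (F_ess_surj X Y P hP Q hQ E a') as [a [u [ui [Hu Iu]]]].
      destruct (H1 a) as [b Hab]. exists (FF b).
      apply (DDual_unitary (a := FF a) (b := FF b) (u := ui) (ui := u) (v := idm _) (vi := idm _)).
      * apply DDual_F; auto.
      * apply (dag_unitary_sym hQ); auto.
      * destruct Iu; split; auto.
      * apply (dag_id hQ).
      * apply idinv.
    + intro b'. destruct (F_ess_surj X Y P hP Q hQ E b') as [b [u [ui [Hu Iu]]]].
      destruct (H2 b) as [a Hab]. exists (FF a).
      apply (DDual_unitary (a := FF a) (b := FF b) (u := idm _) (ui := idm _) (v := ui) (vi := u)).
      * apply DDual_F; auto.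
      * apply (dag_id hQ).
      * apply idinv.
      * apply (dag_unitary_sym hQ); auto.
      * destruct Iu; split; auto.
  - intros [H1 H2]. split.
    + intro a. destruct (H1 (FF a)) as [b' Hab'].
      destruct (F_ess_surj X Y P hP Q hQ E b') as [b [u [ui [Hu Iu]]]].
      exists b. apply DDual_Frefl.
      apply (DDual_unitary (a := FF a) (b := b') (u := idm _) (ui := idm _) (v := u) (vi := ui)); auto.
      * apply (dag_id hQ).
      * apply idinv.
    + intro b. destruct (H2 (FF b)) as [a' Ha'b].
      destruct (F_ess_surj X Y P hP Q hQ E a') as [a [u [ui [Hu Iu]]]].
      exists a. apply DDual_Frefl.
      apply (DDual_unitary (a := a') (b := FF b) (u := u) (ui := ui) (v := idm _) (vi := idm _)); auto.
      * apply (dag_id hQ).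
      * apply idinv.
Qed.
End Tr.

End Tr.
Import Tr.


Unset Implicit Arguments.
Set Strict Implicit.

Theorem mainTheorem12 (X Y : SMAICD)
    (P : PairingSet (sA X)) (hP : PosStruct P)
    (P' : PairingSet (sA Y)) (hP' : PosStruct P')
    (E : sm_dagger_equivalent hP hP') :
  pairing_set_eq (Pstar (sD X) P) P <-> pairing_set_eq (Pstar (sD Y) P') P'.
Proof.
  destruct E as [E].
  pose proof (char hP) as H1. pose proof (char hP') as H2. pose proof (DD_transport E) as H3.
  tauto.
Qed.
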